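(* Let $\alpha\ge-1/2$, $a\ge1$, $j\in\{1,2,\dots\}$ and $k>0$. For $x,y\in\mathbb{R}_+$, $x\neq y$, let \[ I_k=\int_{-1}^1\int_0^1\xi^{-k}\beta_{\alpha+aj}(\xi)\exp\Big(-\frac{x^2+y^2+2xys}{4\xi}\Big)d\xi\,\Pi_{\alpha+aj}(ds). \] Then $I_k\le\dfrac{C_{\alpha,k}}{(x+y)^{2\alpha+1}(xy)^{aj}|x-y|^{2k}}$ with $C_{\alpha,k}$ independent of $j$, $x$, $y$.
   Context: For $m>-1$, $\beta_m(\xi)=\sqrt{\tfrac2\pi}\big(\frac{1-\xi^2}{2\xi}\big)^{1+m}\frac1{1-\xi^2}\big(\log\frac{1+\xi}{1-\xi}\big)^{-1/2}$, $\xi\in(0,1)$. For $\nu>-1/2$, $\Pi_\nu$ is the measure on $[-1,1]$ given by $\Pi_\nu(du)=\frac{(1-u^2)^{\nu-1/2}}{\sqrt\pi\,2^\nu\Gamma(\nu+1/2)}du$. *)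

(* Defs.v *)
From Stdlib Require Import Reals Lra ClassicalEpsilon.
Open Scope R_scope.

(* Total Riemann integral on [a,b]: the Stdlib RiemannInt when f is
   Riemann integrable (value independent of the proof), 0 otherwise. *)
Definition Rint (f : R -> R) (a b : R) : R :=
  match excluded_middle_informative (inhabited (Riemann_integrable f a b)) with
  | left H => RiemannInt (epsilon H (fun _ => True))
  | right _ => 0
  end.

(* Total limit of a real sequence (0 if it does not converge). *)
Definition Rlim (u : nat -> R) : R :=
  match excluded_middle_informative (exists l, Un_cv u l) with
  | left H => proj1_sig (constructive_indefinite_description _ H)
  | right _ => 0
  end.

Definition Gamma (z : R) : R :=
  Rlim (fun n => Rint (fun t => Rpower t (z - 1) * exp (- t))
                      (/ INR (S n)) (INR (S n))).

Definition beta (m xi : R) : R :=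
  sqrt (2 / PI) * Rpower ((1 - xi ^ 2) / (2 * xi)) (1 + m) * / (1 - xi ^ 2)
  * Rpower (ln ((1 + xi) / (1 - xi))) (- (1 / 2)).

Definition Pi_density (nu u : R) : R :=
  Rpower (1 - u ^ 2) (nu - 1 / 2)
  / (sqrt PI * Rpower 2 nu * Gamma (nu + 1 / 2)).

Definition I_k (k nu x y : R) : R :=
  Rint (fun s =>
          Rint (fun xi => Rpower xi (- k) * beta nu xi
                          * exp (- ((x ^ 2 + y ^ 2 + 2 * x * y * s) / (4 * xi))))
               0 1
          * Pi_density nu s)
       (-1) 1.

(* Main.v *)
Require Import Defs.
From Stdlib Require Import Reals Lra ClassicalEpsilon.
From Coquelicot Require Import Coquelicot.
Open Scope R_scope.

Lemma ln_le_sub1 t : 0 < t -> ln t <= t - 1.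
Proof.
  intros Ht. assert (H := exp_ineq1_le (t - 1)).
  rewrite <- (ln_exp (t-1)).
  destruct (Req_dec t (exp (t-1))) as [E|E]. rewrite <- E; lra.
  left; apply ln_increasing; lra.
Qed.

Lemma ln_mono a b : 0 < a -> a <= b -> ln a <= ln b.
Proof. intros Ha [H|H]. left; apply ln_increasing; lra. subst; lra. Qed.

Lemma pow_le_exp p c t : 0 <= p -> 0 < c -> 0 < t ->
  p * ln t <= p * c * t - p * (1 + ln c).
Proof.
  intros Hp Hc Ht. assert (H := ln_le_sub1 (c*t) ltac:(apply Rmult_lt_0_compat; lra)).
  rewrite ln_mult in H by lra.
  assert (p * (ln t) <= p * (c*t - 1 - ln c)) by (apply Rmult_le_compat_l; lra).
  nra.
Qed.

Lemma Rint_RInt (f : R -> R) a b : ex_RInt f a b -> Rint f a b = RInt f a b.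
Proof.
  intros H. unfold Rint. destruct excluded_middle_informative as [Hi|Hi].
  - symmetry; apply RInt_Reals.
  - exfalso; apply Hi; constructor; now apply ex_RInt_Reals_0.
Qed.

Lemma Rint_not (f : R -> R) a b : ~ ex_RInt f a b -> Rint f a b = 0.
Proof.
  intros H. unfold Rint. destruct excluded_middle_informative as [Hi|Hi]; auto.
  exfalso; apply H. destruct Hi as [Hi]. now apply ex_RInt_Reals_1.
Qed.

Lemma ex_RInt_der (f : R -> R) a b : a <= b -> (forall t, a <= t <= b -> ex_derive f t) -> ex_RInt f a b.
Proof.
  intros Hab H. apply (ex_RInt_continuous (V:=R_CompleteNormedModule)). intros t Ht.
  rewrite Rmin_left, Rmax_right in Ht by lra.
  apply (ex_derive_continuous (V:=R_NormedModule)), H; lra.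
Qed.

Lemma RInt_le' (f g : R -> R) a b : a <= b -> ex_RInt f a b -> ex_RInt g a b ->
  (forall t, a < t < b -> f t <= g t) -> RInt f a b <= RInt g a b.
Proof. intros; apply RInt_le; auto. Qed.

Lemma RInt_le_const (f : R -> R) a b c : a <= b -> ex_RInt f a b ->
  (forall t, a < t < b -> f t <= c) -> RInt f a b <= c * (b - a).
Proof.
  intros Hab Hf H. assert (RInt f a b <= RInt (fun _ => c) a b).
  apply RInt_le; auto. apply ex_RInt_const.
  rewrite RInt_const in H0. unfold scal in H0; simpl in H0; unfold mult in H0; simpl in H0. lra.
Qed.

Lemma RInt_ge_const (f : R -> R) a b c : a <= b -> ex_RInt f a b ->
  (forall t, a < t < b -> c <= f t) -> c * (b - a) <= RInt f a b.
Proof.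
  intros Hab Hf H. assert (RInt (fun _ => c) a b <= RInt f a b).
  apply RInt_le; auto. apply ex_RInt_const.
  rewrite RInt_const in H0. unfold scal in H0; simpl in H0; unfold mult in H0; simpl in H0. lra.
Qed.

Lemma RInt_ge0 (f : R -> R) a b : a <= b -> ex_RInt f a b -> (forall t, a < t < b -> 0 <= f t) -> 0 <= RInt f a b.
Proof. intros. assert (H2 := RInt_ge_const f a b 0 H H0 H1). lra. Qed.

Lemma RInt_chasles' (f : R -> R) a b c : ex_RInt f a b -> ex_RInt f b c -> RInt f a c = RInt f a b + RInt f b c.
Proof. intros. rewrite <- RInt_Chasles with (b:=b); auto. Qed.

Lemma RInt_FTC (F f : R -> R) a b : a <= b -> (forall t, a <= t <= b -> is_derive F t (f t)) ->
  (forall t, a <= t <= b -> continuous f t) -> RInt f a b = F b - F a.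
Proof.
  intros Hab H1 H2. apply is_RInt_unique. apply (is_RInt_derive F f).
  intros t Ht; rewrite Rmin_left, Rmax_right in Ht by lra; auto.
  intros t Ht; rewrite Rmin_left, Rmax_right in Ht by lra; auto.
Qed.

Lemma exp_mono a b : a <= b -> exp a <= exp b.
Proof. intros [H|H]. left; apply exp_increasing; auto. subst; lra. Qed.

Lemma RInt_scal_R (f : R -> R) a b c : ex_RInt f a b -> RInt (fun y => c * f y) a b = c * RInt f a b.
Proof. intros H. exact (RInt_scal (V:=R_CompleteNormedModule) f a b c H). Qed.

Lemma exp_Rln_eq a b : 0 < a -> 0 < b -> ln (a / b) = ln a - ln b.
Proof. intros. unfold Rdiv. rewrite ln_mult, ln_Rinv by (try apply Rinv_0_lt_compat; lra). ring. Qed.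


Definition fz z t := exp ((z-1) * ln t - t).

Lemma fz_pos z t : 0 < fz z t.
Proof. apply exp_pos. Qed.

Lemma fz_der z t : 0 < t -> ex_derive (fz z) t.
Proof. intros Ht. unfold fz. auto_derive. lra. Qed.

Lemma fz_ex z A B : 0 < A -> A <= B -> ex_RInt (fz z) A B.
Proof. intros HA HAB. apply ex_RInt_der; auto. intros t Ht; apply fz_der; lra. Qed.

Lemma gam_ext z A B : 0 < A -> A <= B ->
  ex_RInt (fun t => Rpower t (z-1) * exp (-t)) A B /\
  RInt (fun t => Rpower t (z-1) * exp (-t)) A B = RInt (fz z) A B.
Proof.
  intros HA HAB.
  assert (He : forall t, Rmin A B < t < Rmax A B -> fz z t = Rpower t (z-1) * exp (-t)).
  { intros t Ht. rewrite Rmin_left, Rmax_right in Ht by lra.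
    unfold fz, Rpower. rewrite <- exp_plus. f_equal; ring. }
  split.
  - apply (ex_RInt_ext (fz z)); auto. apply fz_ex; auto.
  - symmetry; apply RInt_ext; auto.
Qed.

Definition Kz z := exp (- (z-1) * (1 + ln (/ (2*z)))).

Lemma fz_le z t : 1 <= z -> 0 < t -> fz z t <= Kz z * exp (- t / 2).
Proof.
  intros Hz Ht. unfold fz, Kz. rewrite <- exp_plus.
  assert (Hc : 0 < / (2*z)) by (apply Rinv_0_lt_compat; lra).
  assert (H := pow_le_exp (z-1) (/(2*z)) t ltac:(lra) Hc Ht).
  assert ((z-1) * / (2*z) * t <= t / 2).
  { assert ((z-1) * / (2*z) <= /2).
    { apply Rmult_le_reg_r with (2*z). lra. rewrite Rmult_assoc, Rinv_l by lra. lra. }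
    assert (0 <= t) by lra.
    assert ((z - 1) * / (2 * z) * t <= /2 * t) by (apply Rmult_le_compat_r; lra). lra. }
  apply exp_mono; lra.
Qed.

Lemma fz_int_bound z A B : 1 <= z -> 0 < A -> A <= B -> RInt (fz z) A B <= 2 * Kz z.
Proof.
  intros Hz HA HAB.
  assert (HK : 0 < Kz z) by apply exp_pos.
  assert (Hg : ex_RInt (fun t => Kz z * exp (- t / 2)) A B).
  { apply ex_RInt_der; auto. intros; auto_derive; auto. }
  assert (H1 : RInt (fz z) A B <= RInt (fun t => Kz z * exp (- t / 2)) A B).
  { apply RInt_le'; auto. apply fz_ex; auto. intros t Ht; apply fz_le; lra. }
  rewrite (RInt_FTC (fun t => - 2 * Kz z * exp (- t / 2)) (fun t => Kz z * exp (- t / 2))) in H1; auto.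
  - assert (0 < exp (- B / 2)) by apply exp_pos.
    assert (exp (- A / 2) <= 1). { rewrite <- exp_0. apply exp_mono. lra. }
    simpl in H1. assert (Kz z * exp (- A / 2) <= Kz z) by (rewrite <- (Rmult_1_r (Kz z)) at 2; apply Rmult_le_compat_l; lra). assert (0 < Kz z * exp (- B / 2)) by (apply Rmult_lt_0_compat; lra). lra.
  - intros t Ht. auto_derive; auto. replace (exp (- t * / 2)) with (exp (- t / 2)) by (f_equal; unfold Rdiv; ring). field.
  - intros t Ht. apply (ex_derive_continuous (V:=R_NormedModule)). auto_derive; auto.
Qed.

Lemma fz_mono z A' A B B' : 0 < A' -> A' <= A -> A <= B -> B <= B' ->
  RInt (fz z) A B <= RInt (fz z) A' B'.
Proof.
  intros H1 H2 H3 H4.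
  rewrite (RInt_chasles' _ A' A B'); try (apply fz_ex; lra).
  rewrite (RInt_chasles' _ A B B'); try (apply fz_ex; lra).
  assert (0 <= RInt (fz z) A' A) by (apply RInt_ge0; auto; [apply fz_ex; lra | intros; left; apply fz_pos]).
  assert (0 <= RInt (fz z) B B') by (apply RInt_ge0; auto; [apply fz_ex; lra | intros; left; apply fz_pos]).
  lra.
Qed.

Definition aN z (N : nat) := RInt (fz z) (/ INR (S N)) (INR (S N)).

Lemma aN_bounds N : 0 < / INR (S N) /\ / INR (S N) <= 1 /\ 1 <= INR (S N).
Proof.
  assert (H : 1 <= INR (S N)) by (rewrite S_INR; assert (0 <= INR N) by apply pos_INR; lra).
  split; [apply Rinv_0_lt_compat; lra|]. split; auto.
  rewrite <- Rinv_1. apply Rinv_le_contravar; lra.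
Qed.

Lemma Gamma_spec z : 1 <= z -> Un_cv (aN z) (Gamma z) /\ forall N, aN z N <= Gamma z.
Proof.
  intros Hz.
  assert (Hg : Un_growing (aN z)).
  { intros N. unfold aN. destruct (aN_bounds N) as [a1 [a2 a3]].
    destruct (aN_bounds (S N)) as [b1 [b2 b3]].
    apply fz_mono; auto; try lra.
    apply Rinv_le_contravar; [lra|]. rewrite (S_INR (S N)); lra.
    rewrite (S_INR (S N)); lra. }
  assert (Hb : has_ub (aN z)).
  { exists (2 * Kz z). intros x [N ->]. unfold aN. destruct (aN_bounds N) as [a1 [a2 a3]].
    apply fz_int_bound; lra. }
  destruct (growing_cv _ Hg Hb) as [l Hl].
  assert (HG : Gamma z = l).
  { unfold Gamma, Rlim. destruct excluded_middle_informative as [H|H].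
    - destruct (constructive_indefinite_description _ H) as [l' Hl']. simpl.
      apply (UL_sequence (fun n => Rint (fun t => Rpower t (z - 1) * exp (- t)) (/ INR (S n)) (INR (S n)))); auto.
      eapply Un_cv_ext; [|apply Hl]. intros N. unfold aN.
      destruct (aN_bounds N) as [a1 [a2 a3]]. destruct (gam_ext z (/ INR (S N)) (INR (S N))) as [e1 e2]; try lra.
      rewrite Rint_RInt; auto.
    - exfalso. apply H. exists l. eapply Un_cv_ext; [|apply Hl]. intros N. unfold aN.
      destruct (aN_bounds N) as [a1 [a2 a3]]. destruct (gam_ext z (/ INR (S N)) (INR (S N))) as [e1 e2]; try lra.
      rewrite Rint_RInt; auto. }
  rewrite HG. split; auto. intros N; apply growing_ineq; auto.
Qed.

Lemma gamma_ge_int z A B : 1 <= z -> 0 < A -> A <= B -> RInt (fz z) A B <= Gamma z.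
Proof.
  intros Hz HA HAB.
  destruct (nfloor_ex (Rmax B (/ A)) ltac:(apply Rle_trans with B; [lra| apply Rmax_l])) as [N [HN1 HN2]].
  destruct (Gamma_spec z Hz) as [_ HG]. specialize (HG N).
  assert (HS : INR (S N) = INR N + 1) by apply S_INR.
  assert (HBm := Rmax_l B (/A)). assert (HAm := Rmax_r B (/A)).
  destruct (aN_bounds N) as [a1 [a2 a3]].
  apply Rle_trans with (aN z N); auto. unfold aN.
  apply fz_mono; auto; try lra.
  rewrite <- (Rinv_inv A). apply Rinv_le_contravar. apply Rinv_0_lt_compat; lra. lra.
Qed.

Lemma gamma_lower z : 1 <= z -> exp ((z-1) * ln z - z - 1) <= Gamma z.
Proof.
  intros Hz. apply Rle_trans with (RInt (fz z) z (z+1)).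
  - assert (H := RInt_ge_const (fz z) z (z+1) (exp ((z-1) * ln z - z - 1))).
    replace (z + 1 - z) with 1 in H by ring. rewrite Rmult_1_r in H. apply H. lra.
    apply fz_ex; lra. intros t Ht. unfold fz. apply exp_mono.
    assert (ln z <= ln t) by (apply ln_mono; lra).
    assert ((z-1) * ln z <= (z-1) * ln t) by (apply Rmult_le_compat_l; lra). lra.
  - apply gamma_ge_int; lra.
Qed.

Lemma gamma_pos z : 1 <= z -> 0 < Gamma z.
Proof. intros Hz. eapply Rlt_le_trans; [apply exp_pos | apply gamma_lower; auto]. Qed.


Lemma L_ge xi : 0 < xi < 1 -> xi <= ln ((1 + xi) / (1 - xi)).
Proof.
  intros H.
  assert (Hp : 0 < (1 - xi) / (1 + xi)) by (apply Rdiv_lt_0_compat; lra).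
  assert (H1 := ln_le_sub1 _ Hp).
  replace ((1 + xi) / (1 - xi)) with (/ ((1 - xi) / (1 + xi))) by (field; lra).
  rewrite ln_Rinv by auto.
  assert ((1 - xi) / (1 + xi) - 1 = - (2*xi/(1+xi))) by (field; lra).
  assert (xi <= 2*xi/(1+xi)).
  { apply Rmult_le_reg_r with (1+xi). lra. unfold Rdiv. rewrite Rmult_assoc, Rinv_l by lra. nra. }
  lra.
Qed.

Lemma sqrt2_exp : sqrt 2 = exp (ln 2 / 2).
Proof.
  rewrite <- Rpower_sqrt by lra. unfold Rpower. f_equal. field.
Qed.

Lemma beta_le m xi : 1/2 <= m -> 0 < xi < 1 ->
  beta m xi <= / sqrt PI * exp (ln 2 / 2 - (1+m) * (ln 2 + ln xi) - ln xi / 2).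
Proof.
  intros Hm Hxi. unfold beta.
  set (u := 1 - xi^2).
  assert (Hu : 0 < u < 1) by (unfold u; nra).
  assert (Hpi : 0 < PI) by apply PI_RGT_0.
  assert (Hsp : 0 < sqrt PI) by (apply sqrt_lt_R0; lra).
  assert (HL := L_ge xi Hxi).
  assert (E1 : Rpower (u / (2 * xi)) (1 + m) * / u = exp (m * ln u - (1+m) * (ln 2 + ln xi))).
  { unfold Rpower. unfold Rdiv. rewrite !ln_mult, ln_Rinv, ln_mult by (try apply Rinv_0_lt_compat; lra).
    rewrite <- (exp_ln u) at 2 by lra. rewrite <- exp_Ropp, <- exp_plus. f_equal. ring. }
  assert (E2 : sqrt (2 / PI) = exp (ln 2 / 2) * / sqrt PI).
  { unfold Rdiv. rewrite sqrt_mult_alt by lra. rewrite sqrt2_exp. rewrite sqrt_inv. reflexivity. }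
  rewrite E2.
  replace (exp (ln 2 / 2) * / sqrt PI * Rpower (u / (2 * xi)) (1 + m) * / u *
     Rpower (ln ((1 + xi) / (1 - xi))) (- (1 / 2)))
    with (/ sqrt PI * (exp (ln 2 / 2) * (Rpower (u / (2 * xi)) (1 + m) * / u) *
     Rpower (ln ((1 + xi) / (1 - xi))) (- (1 / 2)))) by ring.
  rewrite E1. apply Rmult_le_compat_l. left; apply Rinv_0_lt_compat; lra.
  unfold Rpower. rewrite <- !exp_plus. apply exp_mono.
  assert (ln u < 0) by (rewrite <- ln_1; apply ln_increasing; lra).
  assert (m * ln u <= 0) by nra.
  assert (ln xi <= ln (ln ((1 + xi) / (1 - xi)))) by (apply ln_mono; lra).
  lra.
Qed.

Lemma inner_pt m k E xi : 1/2 <= m -> 0 < k -> 0 < xi < 1 ->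
  Rpower xi (- k) * beta m xi * exp (- (E / (4 * xi))) <=
  / sqrt PI * exp (- (m + 1/2) * ln 2) * exp (- (m + 3/2 + k) * ln xi - E / (4 * xi)).
Proof.
  intros Hm Hk Hxi.
  assert (Hb := beta_le m xi Hm Hxi).
  assert (Hpi : 0 < PI) by apply PI_RGT_0.
  assert (Hsp : 0 < sqrt PI) by (apply sqrt_lt_R0; lra).
  assert (H0 : 0 <= Rpower xi (-k) * exp (- (E / (4 * xi)))) by (left; apply Rmult_lt_0_compat; apply exp_pos).
  apply Rle_trans with (Rpower xi (-k) * exp (- (E / (4 * xi))) *
       (/ sqrt PI * exp (ln 2 / 2 - (1+m) * (ln 2 + ln xi) - ln xi / 2))).
  { replace (Rpower xi (- k) * beta m xi * exp (- (E / (4 * xi)))) with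
      (Rpower xi (-k) * exp (- (E / (4 * xi))) * beta m xi) by ring.
    apply Rmult_le_compat_l; auto. }
  right. unfold Rpower. 
  replace (exp (- k * ln xi) * exp (- (E / (4 * xi))) *
   (/ sqrt PI * exp (ln 2 / 2 - (1 + m) * (ln 2 + ln xi) - ln xi / 2))) with
   (/ sqrt PI * (exp (- k * ln xi) * exp (- (E / (4 * xi))) * exp (ln 2 / 2 - (1 + m) * (ln 2 + ln xi) - ln xi / 2))) by ring.
  rewrite <- !exp_plus. rewrite (Rmult_assoc (/ sqrt PI)), <- exp_plus. f_equal. f_equal. set (a := ln xi). set (b := ln 2). set (c := E / (4 * xi)). field.
Qed.

Definition Mk k := 16 * (1 + k)^2.

Lemma tail_ineq z k t : 1 <= z -> 0 < k -> Mk k * z <= t ->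
  (z + k) * ln t - t <= (z + k - 1) * ln z - z - 1.
Proof.
  intros Hz Hk Ht. unfold Mk in Ht.
  set (rho := t / z).
  assert (HM : 16 <= 16 * (1 + k)^2) by nra.
  assert (Hrho : 16 * (1+k)^2 <= rho).
  { unfold rho. apply Rmult_le_reg_r with z. lra. replace (t / z * z) with t by (field; lra). lra. }
  assert (Ht' : t = rho * z) by (unfold rho; field; lra).
  assert (Hlt : ln t = ln rho + ln z) by (rewrite Ht'; apply ln_mult; lra).
  assert (Hsr : 4 * (1 + k) <= sqrt rho).
  { rewrite <- (sqrt_square (4 * (1+k))) by lra. apply sqrt_le_1_alt. nra. }
  assert (Hsq : sqrt rho * sqrt rho = rho) by (apply sqrt_sqrt; lra).
  assert (Hl1 : ln rho = 2 * ln (sqrt rho)).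
  { rewrite <- Hsq at 1. rewrite ln_mult by (apply sqrt_lt_R0; lra). ring. }
  assert (Hl2 := ln_le_sub1 (sqrt rho) ltac:(apply sqrt_lt_R0; lra)).
  assert (Hk1 : (1 + k) * ln rho <= (rho - 1) / 2).
  { assert ((1+k) * ln rho <= (1 + k) * (2 * (sqrt rho - 1))) by (apply Rmult_le_compat_l; lra). nra. }
  assert (Hlr : 0 <= ln rho) by (rewrite <- ln_1; apply ln_mono; lra).
  assert (Hz2 : (z + k) * ln rho <= z * ((1 + k) * ln rho)) by (assert (0 <= k * (z - 1) * ln rho) by (apply Rmult_le_pos; [apply Rmult_le_pos|]; lra); nra).
  assert (Hz3 : z * ((1 + k) * ln rho) <= z * ((rho - 1) / 2)) by (apply Rmult_le_compat_l; lra).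
  assert (Hlz := ln_le_sub1 z ltac:(lra)).
  rewrite Hlt, Ht'. nra.
Qed.

Lemma h_mono p E xi xi1 : 0 <= p -> 0 < xi -> xi <= xi1 -> p <= E / (4 * xi1) ->
  exp (- p * ln xi - E / (4 * xi)) <= exp (- p * ln xi1 - E / (4 * xi1)).
Proof.
  intros Hp H0 H1 H2. apply exp_mono.
  assert (Hl := ln_le_sub1 (xi1 / xi) ltac:(apply Rdiv_lt_0_compat; lra)).
  assert (Hd : ln (xi1 / xi) = ln xi1 - ln xi).
  { unfold Rdiv. rewrite ln_mult, ln_Rinv by (try apply Rinv_0_lt_compat; lra). ring. }
  assert (Hq : 0 <= xi1 / xi - 1).
  { assert (1 <= xi1 / xi). { apply Rmult_le_reg_r with xi. lra. unfold Rdiv. rewrite Rmult_assoc, Rinv_l by lra. lra. } lra. }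
  assert (He : E / (4 * xi) - E / (4 * xi1) = E / (4 * xi1) * (xi1 / xi - 1)) by (field; lra).
  assert (p * (xi1 / xi - 1) <= E / (4 * xi1) * (xi1 / xi - 1)) by (apply Rmult_le_compat_r; lra).
  assert (p * (ln xi1 - ln xi) <= p * (xi1/xi - 1)) by (apply Rmult_le_compat_l; lra).
  nra.
Qed.

Lemma subst_lemma z E a : 0 < E -> 0 < a -> a <= 1 ->
  ex_RInt (fun y => exp (- (z + 1) * ln y - E / (4 * y))) a 1 /\
  RInt (fun y => exp (- (z + 1) * ln y - E / (4 * y))) a 1
   = exp (z * ln (4 / E)) * RInt (fz z) (E / 4) (E / (4 * a)).
Proof.
  intros HE Ha Ha1.
  set (h2 := fun y => exp (- (z + 1) * ln y - E / (4 * y))).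
  assert (Hex : ex_RInt h2 a 1).
  { apply ex_RInt_der; auto. intros t Ht. unfold h2. auto_derive; repeat split; lra. }
  split; auto.
  assert (Hc := RInt_comp (V:=R_CompleteNormedModule) (fz z) (fun y => E / (4 * y)) (fun y => - E / (4 * y^2)) a 1).
  rewrite Rmin_left, Rmax_right in Hc by lra.
  assert (Hc' : RInt (fun y => scal (- E / (4 * y ^ 2)) (fz z (E / (4 * y)))) a 1 = RInt (fz z) (E / (4 * a)) (E / (4 * 1))).
  { apply Hc.
    - intros t Ht. apply (ex_derive_continuous (V:=R_NormedModule)). apply fz_der.
      apply Rdiv_lt_0_compat; lra.
    - intros t Ht. split.
      + auto_derive. lra. field. lra.
      + apply (ex_derive_continuous (V:=R_NormedModule)). auto_derive; repeat apply Rmult_integral_contrapositive_currified; lra. }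
  assert (Hext : RInt (fun y => scal (- E / (4 * y ^ 2)) (fz z (E / (4 * y)))) a 1 =
                 RInt (fun y => (- exp (- (z * ln (4 / E)))) * (h2 y)) a 1).
  { apply RInt_ext. rewrite Rmin_left, Rmax_right by lra. intros t Ht.
    assert (Ht0 : 0 < t) by lra.
    unfold scal; simpl; unfold mult; simpl. unfold h2, fz.
    replace (- E / (4 * (t * (t * 1)))) with (- exp (ln E - ln 4 - 2 * ln t)).
    2:{ replace (ln E - ln 4 - 2 * ln t) with (ln (E / (4 * (t * (t * 1))))).
        rewrite exp_ln. field; lra. apply Rdiv_lt_0_compat; nra.
        unfold Rdiv. rewrite ln_mult, ln_Rinv, ln_mult by (try apply Rinv_0_lt_compat; nra).
        rewrite Rmult_1_r, ln_mult by lra. ring. }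
    rewrite <- !Ropp_mult_distr_l, <- !exp_plus. f_equal. f_equal.
    unfold Rdiv. rewrite (ln_mult E (/ (4 * t))) by (try apply Rinv_0_lt_compat; lra).
    rewrite (ln_Rinv (4 * t)) by lra. rewrite (ln_mult 4 t) by lra. rewrite (ln_mult 4 (/E)) by (try apply Rinv_0_lt_compat; lra).
    rewrite ln_Rinv by lra. ring. }
  rewrite Hext in Hc'. pose proof (RInt_scal_R h2 a 1 (- exp (- (z * ln (4 / E)))) Hex) as HH.
  rewrite HH in Hc'. clear HH Hext Hc.
  replace (E / (4 * 1)) with (E / 4) in Hc' by (field).
  assert (HEa : E / 4 <= E / (4 * a)).
  { unfold Rdiv. apply Rmult_le_compat_l. lra. apply Rinv_le_contravar; lra. }
  assert (Hsw : RInt (fz z) (E / (4 * a)) (E / 4) = - RInt (fz z) (E / 4) (E / (4 * a))).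
  { rewrite <- (opp_RInt_swap (V:=R_CompleteNormedModule)). reflexivity. apply fz_ex; auto. apply Rdiv_lt_0_compat; lra. }
  rewrite Hsw in Hc'.
  assert (Hp : exp (- (z * ln (4 / E))) * exp (z * ln (4 / E)) = 1) by (rewrite <- exp_plus; replace (- (z * ln (4 / E)) + z * ln (4 / E)) with 0 by ring; apply exp_0).
  set (X := RInt h2 a 1) in *. set (Y := RInt (fz z) (E / 4) (E / (4 * a))) in *.
  set (c := exp (- (z * ln (4 / E)))) in *. set (d := exp (z * ln (4 / E))) in *.
  apply Rmult_eq_reg_l with c. 2: apply Rgt_not_eq, exp_pos.
  rewrite <- Rmult_assoc, Hp. lra.
Qed.


Lemma inner_bound (f : R -> R) z k E c : 1 <= z -> 0 < k -> 0 < E -> 0 <= c ->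
  (forall xi, 0 < xi < 1 -> f xi <= c * exp (- (z + 1 + k) * ln xi - E / (4 * xi))) ->
  Rint f 0 1 <= c * (1 + exp (k * ln (Mk k))) * exp (k * ln z) * Gamma z * exp ((z + k) * ln (4 / E)).
Proof.
  intros Hz Hk HE Hc Hf.
  assert (HG := gamma_pos z Hz).
  assert (HMk : k + 2 <= Mk k) by (unfold Mk; nra).
  set (T := Mk k * z).
  assert (HT : z + 1 + k <= T) by (unfold T; nra).
  assert (HT0 : 0 < T) by lra.
  set (xi0 := E / (4 * T)).
  assert (Hxi0 : 0 < xi0) by (unfold xi0; apply Rdiv_lt_0_compat; lra).
  set (xi1 := Rmin xi0 1).
  assert (Hxi1 : 0 < xi1 <= 1) by (unfold xi1; split; [apply Rmin_glb_lt; lra | apply Rmin_r]).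
  assert (Hxi1' : xi1 <= xi0) by apply Rmin_l.
  set (t1 := E / (4 * xi1)).
  assert (Ht1 : T <= t1).
  { unfold t1. apply Rmult_le_reg_r with (4 * xi1). lra. unfold Rdiv. rewrite Rmult_assoc, Rinv_l by lra.
    apply Rle_trans with (T * (4 * xi0)). apply Rmult_le_compat_l; lra.
    unfold xi0. right. field. lra. }
  assert (Hpos : 0 <= c * (1 + exp (k * ln (Mk k))) * exp (k * ln z) * Gamma z * exp ((z + k) * ln (4 / E))).
  { repeat apply Rmult_le_pos; try lra; try (left; apply exp_pos).
    assert (0 < exp (k * ln (Mk k))) by apply exp_pos. lra. }
  destruct (classic (ex_RInt f 0 1)) as [Hex|Hex].
  2:{ rewrite Rint_not; auto. }
  rewrite Rint_RInt by auto.
  assert (Hex1 : ex_RInt f 0 xi1) by (apply (ex_RInt_Chasles_1 f 0 xi1 1); auto; lra).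
  assert (Hex2 : ex_RInt f xi1 1) by (apply (ex_RInt_Chasles_2 f 0 xi1 1); auto; lra).
  rewrite (RInt_chasles' f 0 xi1 1) by auto.
  assert (P1 : RInt f 0 xi1 <= c * exp (k * ln z) * Gamma z * exp ((z + k) * ln (4 / E))).
  { apply Rle_trans with ((c * exp (- (z + 1 + k) * ln xi1 - E / (4 * xi1))) * (xi1 - 0)).
    { apply RInt_le_const; auto. lra. intros t Ht.
      apply Rle_trans with (c * exp (- (z + 1 + k) * ln t - E / (4 * t))). apply Hf; lra.
      apply Rmult_le_compat_l; auto. apply h_mono; try lra. fold t1. lra. }
    rewrite Rminus_0_r, Rmult_assoc.
    replace (c * exp (k * ln z) * Gamma z * exp ((z + k) * ln (4 / E))) with (c * (exp (k * ln z) * Gamma z * exp ((z + k) * ln (4 / E)))) by ring.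
    apply Rmult_le_compat_l; auto.
    assert (Hxe : xi1 = exp (ln xi1)) by (rewrite exp_ln; lra).
    rewrite Hxe at 3. rewrite <- exp_plus.
    assert (Hl : ln xi1 = - ln (4 / E) - ln t1).
    { unfold t1. rewrite !exp_Rln_eq by (try apply Rmult_lt_0_compat; lra). rewrite ln_mult by lra. ring. }
    fold t1. rewrite Hl.
    assert (Htail := tail_ineq z k t1 Hz Hk ltac:(fold T; lra)).
    apply Rle_trans with (exp ((z + k) * ln (4 / E)) * exp ((z + k - 1) * ln z - z - 1)).
    { rewrite <- exp_plus. apply exp_mono. set (l := ln (4 / E)). set (m := ln t1) in *. assert (- (z + 1 + k) * (- l - m) - t1 + (- l - m) = (z+k)*l + ((z+k)*m - t1)) by ring. lra. }
    replace (exp (k * ln z) * Gamma z * exp ((z + k) * ln (4 / E))) with (exp ((z + k) * ln (4 / E)) * (exp (k * ln z) * Gamma z)) by ring.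
    apply Rmult_le_compat_l. left; apply exp_pos.
    replace ((z + k - 1) * ln z - z - 1) with (k * ln z + ((z - 1) * ln z - z - 1)) by ring.
    rewrite exp_plus. apply Rmult_le_compat_l. left; apply exp_pos. apply gamma_lower; auto. }
  assert (P2 : RInt f xi1 1 <= c * exp (k * ln (Mk k)) * exp (k * ln z) * Gamma z * exp ((z + k) * ln (4 / E))).
  { destruct (Rle_lt_dec 1 xi0) as [H1|H1].
    { assert (xi1 = 1) by (unfold xi1; apply Rmin_right; lra). rewrite H, RInt_point.
      change (@zero R_AbsRing) with 0. repeat apply Rmult_le_pos; try lra; left; apply exp_pos. }
    assert (Hx : xi1 = xi0) by (unfold xi1; apply Rmin_left; lra).
    rewrite Hx in *.
    destruct (subst_lemma z E xi0 HE Hxi0 ltac:(lra)) as [Hh2 Hsub].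
    apply Rle_trans with (RInt (fun y => c * exp (- k * ln xi0) * exp (- (z + 1) * ln y - E / (4 * y))) xi0 1).
    { apply RInt_le'; auto. lra. apply ex_RInt_der. lra. intros t Ht; auto_derive; repeat split; lra.
      intros t Ht. apply Rle_trans with (c * exp (- (z + 1 + k) * ln t - E / (4 * t))). apply Hf; lra.
      rewrite Rmult_assoc. apply Rmult_le_compat_l; auto. rewrite <- exp_plus. apply exp_mono.
      assert (ln xi0 <= ln t) by (apply ln_mono; lra). nra. }
    rewrite (RInt_scal_R (fun y => exp (- (z + 1) * ln y - E / (4 * y))) xi0 1 (c * exp (- k * ln xi0))) by auto.
    rewrite Hsub.
    assert (Hgi := gamma_ge_int z (E / 4) (E / (4 * xi0)) Hz ltac:(lra)
        ltac:(unfold Rdiv; apply Rmult_le_compat_l; [lra| apply Rinv_le_contravar; lra])).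
    assert (Hl : - k * ln xi0 = k * ln (Mk k) + k * ln z + k * ln (4 / E)).
    { unfold xi0, T. assert (0 < Mk k) by lra. rewrite (exp_Rln_eq E (4 * (Mk k * z))) by (try apply Rmult_lt_0_compat; try apply Rmult_lt_0_compat; lra). rewrite (exp_Rln_eq 4 E) by lra. rewrite (ln_mult 4 (Mk k * z)) by (try apply Rmult_lt_0_compat; lra). rewrite (ln_mult (Mk k) z) by lra. ring. }
    rewrite Hl.
    replace ((z + k) * ln (4 / E)) with (k * ln (4 / E) + z * ln (4 / E)) by ring.
    rewrite !exp_plus.
    assert (0 <= c * (exp (k * ln (Mk k)) * exp (k * ln z) * exp (k * ln (4 / E))) * exp (z * ln (4 / E))).
    { repeat apply Rmult_le_pos; try lra; left; apply exp_pos. }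
    assert (H2 := Rmult_le_compat_l _ _ _ H Hgi).
    replace (c * (exp (k * ln (Mk k)) * exp (k * ln z) * exp (k * ln (4 / E))) *
      (exp (z * ln (4 / E)) * RInt (fz z) (E / 4) (E / (4 * xi0)))) with
      (c * (exp (k * ln (Mk k)) * exp (k * ln z) * exp (k * ln (4 / E))) * exp (z * ln (4 / E)) * RInt (fz z) (E / 4) (E / (4 * xi0))) by ring.
    apply Rle_trans with (1 := H2). right; ring. }
  assert (Heq : c * (1 + exp (k * ln (Mk k))) * exp (k * ln z) * Gamma z * exp ((z + k) * ln (4 / E)) =
    c * exp (k * ln z) * Gamma z * exp ((z + k) * ln (4 / E)) + c * exp (k * ln (Mk k)) * exp (k * ln z) * Gamma z * exp ((z + k) * ln (4 / E))) by ring.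
  lra.
Qed.


Definition Ef x y s := x^2 + y^2 + 2 * x * y * s.
Definition th x y s := 1 - (x + y)^2 * (1 - s^2) / (4 * Ef x y s).
Definition Psi0 k z x y s := exp (- (1 + k) * ln (Ef x y s) - z * th x y s).

Definition Ka k := exp (- k * (1 + ln (/ (4 * k)))).
Definition Kd k := exp (- k * (1 + ln (/ k))).

Lemma Ka_spec k z : 0 < k -> 0 < z -> exp (- z / 4) <= Ka k * exp (- k * ln z).
Proof.
  intros Hk Hz. unfold Ka. rewrite <- exp_plus. apply exp_mono.
  assert (H := pow_le_exp k (/ (4 * k)) z ltac:(lra) ltac:(apply Rinv_0_lt_compat; lra) Hz).
  replace (k * / (4 * k) * z) with (z / 4) in H by (field; lra). lra.
Qed.

Lemma Kd_spec k t : 0 < k -> 0 < t -> exp (k * ln t - t) <= Kd k.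
Proof.
  intros Hk Ht. unfold Kd. apply exp_mono.
  assert (H := pow_le_exp k (/ k) t ltac:(lra) ltac:(apply Rinv_0_lt_compat; lra) Ht).
  replace (k * / k * t) with t in H by (field; lra). lra.
Qed.

Lemma Ef_ge x y s : 0 < x -> 0 < y -> -1 <= s -> (x - y)^2 <= Ef x y s.
Proof. intros. unfold Ef. assert (0 <= x * y * (1 + s)) by (apply Rmult_le_pos; nra). nra. Qed.

Lemma Ef_le x y s : 0 < x -> 0 < y -> s <= 1 -> Ef x y s <= (x + y)^2.
Proof. intros. unfold Ef. assert (0 <= x * y * (1 - s)) by (apply Rmult_le_pos; nra). nra. Qed.

Lemma D2_pos x y : x <> y -> 0 < (x - y)^2.
Proof. intros. assert (x - y <> 0) by lra. nra. Qed.

Lemma Ef_pos x y s : 0 < x -> 0 < y -> x <> y -> -1 <= s -> 0 < Ef x y s.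
Proof. intros. apply Rlt_le_trans with ((x-y)^2); [apply D2_pos; auto | apply Ef_ge; auto]. Qed.

Lemma th_eq x y s : 0 < Ef x y s ->
  4 * Ef x y s * th x y s = 2 * (x - y)^2 * (1 - s) + (x + y)^2 * (1 + s)^2.
Proof. intros H. replace (4 * Ef x y s * th x y s) with (4 * Ef x y s - (x+y)^2*(1-s^2)) by (unfold th; field; lra). unfold Ef; ring. Qed.

Lemma Psi0_der k z x y s : 0 < x -> 0 < y -> x <> y -> -1 <= s -> ex_derive (Psi0 k z x y) s.
Proof.
  intros. assert (H3 := Ef_pos x y s H H0 H1 H2). unfold Psi0, th. unfold Ef in *. auto_derive. lra.
Qed.

Lemma Psi0_good k z x y s : 0 < k -> 1 <= z -> 0 < x -> 0 < y -> x <> y -> -1 <= s <= 1 ->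
  1/4 <= th x y s -> (x + y)^2 / 2 <= Ef x y s ->
  Psi0 k z x y s <= 2 / (x + y)^2 * exp (- k * ln ((x - y)^2)) * (Ka k * exp (- k * ln z)).
Proof.
  intros Hk Hz Hx Hy Hxy Hs Ht HE.
  assert (HEp := Ef_pos x y s Hx Hy Hxy ltac:(lra)).
  assert (HD := D2_pos x y Hxy).
  assert (HEge := Ef_ge x y s Hx Hy ltac:(lra)).
  apply Rle_trans with (/ Ef x y s * exp (- k * ln ((x - y)^2)) * exp (- z / 4)).
  { unfold Psi0. rewrite <- (exp_ln (Ef x y s)) at 2 by lra. rewrite <- exp_Ropp, <- !exp_plus.
    apply exp_mono. assert (ln ((x-y)^2) <= ln (Ef x y s)) by (apply ln_mono; lra).
    assert (z * (1/4) <= z * th x y s) by (apply Rmult_le_compat_l; lra). nra. }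
  assert (HS : 0 < (x + y)^2) by nra.
  assert (/ Ef x y s <= 2 / (x + y)^2).
  { apply Rle_trans with (/ ((x+y)^2/2)). apply Rinv_le_contravar; lra. right; field; lra. }
  assert (H2 := Ka_spec k z Hk ltac:(lra)).
  assert (0 < exp (- k * ln ((x - y) ^ 2))) by apply exp_pos.
  assert (0 < exp (- z / 4)) by apply exp_pos.
  apply Rmult_le_compat; try (left; apply Rmult_lt_0_compat; auto; apply Rinv_0_lt_compat; lra); try lra.
  apply Rmult_le_compat_r; lra.
Qed.

Lemma caseA_left k z x y : 0 < k -> 1 <= z -> 0 < x -> 0 < y -> x <> y ->
  ex_RInt (Psi0 k z x y) (-1) 0 /\
  RInt (Psi0 k z x y) (-1) 0 <=
    exp (- k * ln ((x - y)^2)) * (Ka k * exp (- k * ln z)) / (2 * x * y * k)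
    + exp (k * ln 4) * Kd k * exp (- k * ln z) * exp (- k * ln ((x - y)^2)) / (k * x * y).
Proof.
  intros Hk Hz Hx Hy Hxy.
  assert (HD := D2_pos x y Hxy).
  set (D2 := (x - y)^2) in *.
  set (lam := z * D2 / 2).
  assert (Hlam : 0 < lam) by (unfold lam; nra).
  set (Kc := exp (k * ln (2 / lam)) * Kd k).
  assert (HKc : 0 < Kc) by (unfold Kc; apply Rmult_lt_0_compat; apply exp_pos).
  set (c := lam / k * Kc).
  set (F := fun s => - exp (- k * ln (Ef x y s) - lam / Ef x y s) / (2 * x * y * k)
                     + c * (exp (- lam / (2 * Ef x y s)) / (lam * x * y))).
  set (g := fun s => exp (- k * ln (Ef x y s) - lam / Ef x y s) * (1 / Ef x y s - lam / (k * Ef x y s ^ 2))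
                     + c * (exp (- lam / (2 * Ef x y s)) / Ef x y s ^ 2)).
  assert (Hex0 : ex_RInt (Psi0 k z x y) (-1) 0).
  { apply ex_RInt_der. lra. intros t Ht; apply Psi0_der; auto; lra. }
  split; auto.
  assert (Hderg : forall t, -1 <= t -> is_derive F t (g t)).
  { intros t Ht. assert (HE := Ef_pos x y t Hx Hy Hxy Ht).
    unfold F, g. unfold Ef in *. auto_derive.
    - repeat split; try lra; repeat apply Rmult_integral_contrapositive_currified; lra.
    - replace (x * (x * 1) + y * (y * 1) + 2 * x * y * t) with (Ef x y t) by (unfold Ef; ring).
      replace (x ^ 2 + y ^ 2 + 2 * x * y * t) with (Ef x y t) by (unfold Ef; ring).
      fold (Ef x y t) in HE. set (e := Ef x y t) in *. unfold Rminus, Rdiv.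
      set (A := exp (- k * ln e + - (lam * / e))). set (B := exp (- lam * / (2 * e))).
      field. repeat split; lra. }
  assert (Hgc : forall t, -1 <= t -> continuous g t).
  { intros t Ht. assert (HE := Ef_pos x y t Hx Hy Hxy Ht).
    apply (ex_derive_continuous (V:=R_NormedModule)). unfold g; unfold Ef in *. auto_derive.
    repeat split; try lra; repeat apply Rmult_integral_contrapositive_currified; lra. }
  assert (Hexg : ex_RInt g (-1) 0).
  { apply (ex_RInt_continuous (V:=R_CompleteNormedModule)). intros t Ht. rewrite Rmin_left, Rmax_right in Ht by lra. apply Hgc; lra. }
  apply Rle_trans with (RInt g (-1) 0).
  { apply RInt_le'; auto. lra. intros t Ht.
    assert (HE := Ef_pos x y t Hx Hy Hxy ltac:(lra)).
    assert (HEq : Psi0 k z x y t <= exp (- (1 + k) * ln (Ef x y t) - lam / Ef x y t)).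
    { unfold Psi0. apply exp_mono.
      assert (Hth := th_eq x y t HE).
      assert (lam / Ef x y t <= z * th x y t).
      { apply Rmult_le_reg_r with (4 * Ef x y t). lra.
        replace (lam / Ef x y t * (4 * Ef x y t)) with (2 * z * D2) by (unfold lam; field; lra).
        replace (z * th x y t * (4 * Ef x y t)) with (z * (4 * Ef x y t * th x y t)) by ring.
        rewrite Hth. fold D2. assert (0 <= (x+y)^2 * (1+t)^2) by (apply Rmult_le_pos; nra).
        assert (2 * D2 <= 2 * D2 * (1 - t)) by nra. nra. }
      lra. }
    apply Rle_trans with (1 := HEq).
    set (e := Ef x y t) in *.
    assert (Hsplit : exp (- (1 + k) * ln e - lam / e) =
       exp (- k * ln e - lam / e) * (1 / e - lam / (k * e ^ 2)) + lam / k * (exp (- k * ln e - lam / e) / e ^ 2)).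
    { replace (- (1 + k) * ln e - lam / e) with (- ln e + (- k * ln e - lam / e)) by ring.
      rewrite exp_plus, exp_Ropp, exp_ln by lra. set (A := exp (- k * ln e - lam / e)). field. lra. }
    unfold g. fold e. rewrite Hsplit. apply Rplus_le_compat_l. unfold c.
    rewrite Rmult_assoc. apply Rmult_le_compat_l. left; apply Rdiv_lt_0_compat; lra.
    unfold Rdiv. rewrite <- Rmult_assoc. apply Rmult_le_compat_r. left; apply Rinv_0_lt_compat; nra.
    replace (- k * ln e - lam * / e) with ((- k * ln e - lam / (2 * e)) + - lam / (2 * e)) by (field; lra).
    replace (- lam * / (2 * e)) with (- lam / (2 * e)) by (unfold Rdiv; ring).
    rewrite exp_plus. apply Rmult_le_compat_r. left; apply exp_pos.
    unfold Kc.
    assert (Htau := Kd_spec k (lam / (2 * e)) Hk ltac:(apply Rdiv_lt_0_compat; lra)).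
    apply Rle_trans with (exp (k * ln (2 / lam)) * exp (k * ln (lam / (2 * e)) - lam / (2 * e))).
    2:{ apply Rmult_le_compat_l; auto. left; apply exp_pos. }
    rewrite <- exp_plus. right. f_equal.
    assert (0 < e) by lra. rewrite (exp_Rln_eq 2 lam) by lra. rewrite (exp_Rln_eq lam (2 * e)) by lra. rewrite (ln_mult 2 e) by lra. ring. }
  rewrite (RInt_FTC F g (-1) 0); [| lra | intros t Ht; apply Hderg; lra | intros t Ht; apply Hgc; lra].
  unfold F.
  assert (E1 : Ef x y (-1) = D2) by (unfold Ef, D2; ring). rewrite E1.
  assert (HE0 : 0 < Ef x y 0) by (apply Ef_pos; auto; lra).
  assert (Hxyk : 0 < 2 * x * y * k) by (repeat apply Rmult_lt_0_compat; lra).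
  assert (Hlxy : 0 < lam * x * y) by (apply Rmult_lt_0_compat; [apply Rmult_lt_0_compat|]; lra).
  assert (Hc0 : 0 < c) by (unfold c; apply Rmult_lt_0_compat; [apply Rdiv_lt_0_compat|]; lra).
  set (A0 := exp (- k * ln (Ef x y 0) - lam / Ef x y 0)).
  set (A1 := exp (- k * ln D2 - lam / D2)).
  set (B0 := exp (- lam / (2 * Ef x y 0))).
  set (B1 := exp (- lam / (2 * D2))).
  assert (T1 : 0 <= A0 / (2 * x * y * k)) by (left; apply Rdiv_lt_0_compat; [apply exp_pos | lra]).
  assert (T2 : 0 <= c * (B1 / (lam * x * y))) by (left; apply Rmult_lt_0_compat; [lra | apply Rdiv_lt_0_compat; [apply exp_pos | lra]]).
  assert (T3 : A1 / (2*x*y*k) <= exp (- k * ln D2) * (Ka k * exp (- k * ln z)) / (2 * x * y * k)).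
  { unfold Rdiv. apply Rmult_le_compat_r. left; apply Rinv_0_lt_compat; lra.
    unfold A1. replace (- k * ln D2 - lam / D2) with (- k * ln D2 + - (z / 2)) by (unfold lam; field; lra).
    rewrite exp_plus. apply Rmult_le_compat_l. left; apply exp_pos.
    apply Rle_trans with (exp (- z / 4)). apply exp_mono; lra. apply Ka_spec; lra. }
  assert (T4 : c * (B0 / (lam * x * y)) <= exp (k * ln 4) * Kd k * exp (- k * ln z) * exp (- k * ln D2) / (k * x * y)).
  { assert (HB0 : B0 <= 1) by (unfold B0; rewrite <- exp_0; apply exp_mono; assert (0 < lam / (2 * Ef x y 0)) by (apply Rdiv_lt_0_compat; lra); unfold Rdiv in *; lra).
    apply Rle_trans with (c * (1 / (lam * x * y))).
    { apply Rmult_le_compat_l. lra. unfold Rdiv. apply Rmult_le_compat_r. left; apply Rinv_0_lt_compat; lra. lra. }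
    unfold c, Kc. right.
    replace (exp (k * ln 4) * Kd k * exp (- k * ln z) * exp (- k * ln D2)) with (exp (k * ln 4 + - k * ln z + - k * ln D2) * Kd k) by (rewrite !exp_plus; ring).
    replace (k * ln 4 + - k * ln z + - k * ln D2) with (k * ln (2 / lam)).
    field. repeat split; lra.
    unfold lam. replace (2 / (z * D2 / 2)) with (4 / (z * D2)) by (field; lra).
    rewrite (exp_Rln_eq 4 (z * D2)) by (try apply Rmult_lt_0_compat; lra). rewrite (ln_mult z D2) by lra. ring. }
  replace (- A0 / (2 * x * y * k)) with (- (A0 / (2 * x * y * k))) by (field; lra).
  replace (- A1 / (2 * x * y * k)) with (- (A1 / (2 * x * y * k))) by (field; lra).
  lra.
Qed.

Definition K3 k := 4 * Ka k + 4 * Ka k / k + 8 * exp (k * ln 4) * Kd k / k.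

Lemma th_quarter x y s : 0 < x -> 0 < y -> x <> y -> -1 <= s <= 1 ->
  Ef x y s <= 2 * (x - y)^2 * (1 - s) + (x + y)^2 * (1 + s)^2 -> 1/4 <= th x y s.
Proof.
  intros Hx Hy Hxy Hs H. assert (HE := Ef_pos x y s Hx Hy Hxy ltac:(lra)).
  assert (Ht := th_eq x y s HE). apply Rmult_le_reg_l with (4 * Ef x y s). lra. lra.
Qed.

Lemma s_int_bound k z x y : 0 < k -> 1 <= z -> 0 < x -> 0 < y -> x <> y ->
  ex_RInt (Psi0 k z x y) (-1) 1 /\
  RInt (Psi0 k z x y) (-1) 1 <= K3 k * exp (- k * ln z) * exp (- k * ln ((x - y)^2)) / (x + y)^2.
Proof.
  intros Hk Hz Hx Hy Hxy.
  assert (Hex : ex_RInt (Psi0 k z x y) (-1) 1).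
  { apply ex_RInt_der. lra. intros t Ht; apply Psi0_der; auto; lra. }
  split; auto.
  assert (HD := D2_pos x y Hxy).
  assert (HS : 0 < (x + y)^2) by nra.
  assert (HKa : 0 < Ka k) by apply exp_pos.
  assert (HKd : 0 < Kd k) by apply exp_pos.
  set (X := exp (- k * ln z) * exp (- k * ln ((x - y)^2)) / (x + y)^2).
  assert (HX : 0 < X) by (unfold X; apply Rdiv_lt_0_compat; [apply Rmult_lt_0_compat; apply exp_pos | lra]).
  assert (HQ : 2 / (x + y)^2 * exp (- k * ln ((x - y)^2)) * (Ka k * exp (- k * ln z)) = 2 * Ka k * X)
    by (unfold X; field; lra).
  assert (Hex1 : ex_RInt (Psi0 k z x y) (-1) 0) by (apply (ex_RInt_Chasles_1 (Psi0 k z x y) (-1) 0 1); auto; lra).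
  assert (Hex2 : ex_RInt (Psi0 k z x y) 0 1) by (apply (ex_RInt_Chasles_2 (Psi0 k z x y) (-1) 0 1); auto; lra).
  rewrite (RInt_chasles' _ (-1) 0 1) by auto.
  assert (R1 : RInt (Psi0 k z x y) 0 1 <= 2 * Ka k * X).
  { rewrite <- HQ. apply Rle_trans with ((2 / (x + y) ^ 2 * exp (- k * ln ((x - y) ^ 2)) * (Ka k * exp (- k * ln z))) * (1 - 0)). 2: right; ring.
    apply RInt_le_const; auto. lra. intros t Ht. apply Psi0_good; auto; try lra.
    - apply th_quarter; auto; try lra. assert (HEl := Ef_le x y t Hx Hy ltac:(lra)).
      assert (0 <= 2 * (x - y)^2 * (1 - t)) by (apply Rmult_le_pos; nra).
      assert ((x + y)^2 <= (x + y)^2 * (1 + t)^2) by (rewrite <- (Rmult_1_r ((x+y)^2)) at 1; apply Rmult_le_compat_l; nra).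
      lra.
    - unfold Ef. assert (0 <= x * y * t) by (apply Rmult_le_pos; nra). nra. }
  assert (HK3 : K3 k = 4 * Ka k + 4 * Ka k / k + 8 * exp (k * ln 4) * Kd k / k) by reflexivity.
  assert (H4k : 0 < exp (k * ln 4)) by apply exp_pos.
  assert (HXK : K3 k * exp (- k * ln z) * exp (- k * ln ((x - y) ^ 2)) / (x + y) ^ 2 = K3 k * X) by (unfold X; field; lra).
  rewrite HXK.
  destruct (Rlt_le_dec ((x - y)^2) ((x + y)^2 / 2)) as [HA|HB].
  - destruct (caseA_left k z x y Hk Hz Hx Hy Hxy) as [_ HL].
    assert (Hxy8 : (x + y)^2 / 8 < x * y) by nra.
    assert (Hxyp : 0 < x * y) by nra.
    assert (L1 : exp (- k * ln ((x - y)^2)) * (Ka k * exp (- k * ln z)) / (2 * x * y * k) <= 4 * Ka k / k * X).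
    { replace (exp (- k * ln ((x - y)^2)) * (Ka k * exp (- k * ln z)) / (2 * x * y * k)) with
        (Ka k / k * (exp (- k * ln z) * exp (- k * ln ((x - y)^2))) * / (2 * (x * y))) by (field; lra).
      unfold X. replace (4 * Ka k / k * (exp (- k * ln z) * exp (- k * ln ((x - y) ^ 2)) / (x + y) ^ 2)) with
        (Ka k / k * (exp (- k * ln z) * exp (- k * ln ((x - y)^2))) * (4 / (x + y)^2)) by (field; lra).
      apply Rmult_le_compat_l. apply Rmult_le_pos; [left; apply Rdiv_lt_0_compat; lra | left; apply Rmult_lt_0_compat; apply exp_pos].
      apply Rle_trans with (/ (2 * ((x + y)^2 / 8))). apply Rinv_le_contravar; nra. right; field; lra. }
    assert (L2 : exp (k * ln 4) * Kd k * exp (- k * ln z) * exp (- k * ln ((x - y)^2)) / (k * x * y) <= 8 * exp (k * ln 4) * Kd k / k * X).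
    { replace (exp (k * ln 4) * Kd k * exp (- k * ln z) * exp (- k * ln ((x - y)^2)) / (k * x * y)) with
        (exp (k * ln 4) * Kd k / k * (exp (- k * ln z) * exp (- k * ln ((x - y)^2))) * / (x * y)) by (field; lra).
      unfold X. replace (8 * exp (k * ln 4) * Kd k / k * (exp (- k * ln z) * exp (- k * ln ((x - y) ^ 2)) / (x + y) ^ 2)) with
        (exp (k * ln 4) * Kd k / k * (exp (- k * ln z) * exp (- k * ln ((x - y)^2))) * (8 / (x + y)^2)) by (field; lra).
      apply Rmult_le_compat_l. apply Rmult_le_pos; [left; apply Rdiv_lt_0_compat; [apply Rmult_lt_0_compat|]; lra | left; apply Rmult_lt_0_compat; apply exp_pos].
      apply Rle_trans with (/ ((x + y)^2 / 8)). apply Rinv_le_contravar; nra. right; field; lra. }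
    rewrite HK3. nra.
  - assert (R2 : RInt (Psi0 k z x y) (-1) 0 <= 2 * Ka k * X).
    { rewrite <- HQ. apply Rle_trans with ((2 / (x + y) ^ 2 * exp (- k * ln ((x - y) ^ 2)) * (Ka k * exp (- k * ln z))) * (0 - -1)). 2: right; ring.
      apply RInt_le_const; auto. lra. intros t Ht. apply Psi0_good; auto; try lra.
      - apply th_quarter; auto; try lra. assert (HEl := Ef_le x y t Hx Hy ltac:(lra)).
        assert (2 * (x - y)^2 <= 2 * (x - y)^2 * (1 - t)) by nra.
        assert (0 <= (x + y)^2 * (1 + t)^2) by (apply Rmult_le_pos; nra).
        lra.
      - assert (HEg := Ef_ge x y t Hx Hy ltac:(lra)). lra. }
    rewrite HK3.
    assert (0 <= 4 * Ka k / k * X) by (apply Rmult_le_pos; [left; apply Rdiv_lt_0_compat|]; lra).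
    assert (0 <= 8 * exp (k * ln 4) * Kd k / k * X) by (apply Rmult_le_pos; [left; apply Rdiv_lt_0_compat; [repeat apply Rmult_lt_0_compat|]|]; lra).
    nra.
Qed.


Definition Kfin k := (1 + exp (k * ln (Mk k))) / PI * exp ((2 * k + 1/2) * ln 2) * exp 1.

Lemma bd_dens k m x y s : 0 < k -> 1/2 <= m -> 0 < x -> 0 < y -> x <> y -> -1 < s < 1 ->
  (/ sqrt PI * exp (- (m + 1/2) * ln 2) * (1 + exp (k * ln (Mk k))) * exp (k * ln (m + 1/2)) * Gamma (m + 1/2)
     * exp ((m + 1/2 + k) * ln (4 / Ef x y s))) * Pi_density m s
  <= Kfin k * exp (k * ln (m + 1/2)) * exp ((m + 1/2 - 1) * ln (4 / (x + y)^2)) * Psi0 k (m + 1/2) x y s.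
Proof.
  intros Hk Hm Hx Hy Hxy Hs.
  set (z := m + 1/2).
  assert (Hz : 1 <= z) by (unfold z; lra).
  assert (HG := gamma_pos z Hz).
  assert (HE := Ef_pos x y s Hx Hy Hxy ltac:(lra)).
  set (E := Ef x y s) in *.
  set (u := 1 - s^2).
  assert (Hu : 0 < u) by (unfold u; nra).
  assert (HS : 0 < (x + y)^2) by nra.
  assert (Hpi : 0 < PI) by apply PI_RGT_0.
  assert (Hsp : 0 < sqrt PI) by (apply sqrt_lt_R0; lra).
  assert (Hspp : sqrt PI * sqrt PI = PI) by (apply sqrt_sqrt; lra).
  set (M := exp (k * ln (Mk k))).
  assert (HM : 0 < M) by apply exp_pos.
  assert (Hth : 1 - th x y s = (x + y)^2 * u / (4 * E)) by (unfold th, u; fold E; field; lra).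
  assert (Hth0 : 0 < 1 - th x y s) by (rewrite Hth; apply Rdiv_lt_0_compat; [apply Rmult_lt_0_compat|]; lra).
  assert (Hlth : ln (1 - th x y s) = ln ((x + y)^2) + ln u - ln 4 - ln E).
  { rewrite Hth. rewrite exp_Rln_eq by (try apply Rmult_lt_0_compat; lra). rewrite !ln_mult by lra. ring. }
  assert (Hlth2 := ln_le_sub1 _ Hth0).
  unfold Pi_density, Rpower. fold u. replace (m - 1/2) with (z - 1) by (unfold z; field).
  replace (m + 1 / 2) with z by reflexivity.
  unfold Psi0. fold E.
  set (A := (1 + M) / PI * exp (k * ln z)).
  assert (L : / sqrt PI * exp (- z * ln 2) * (1 + M) * exp (k * ln z) * Gamma z * exp ((z + k) * ln (4 / E)) *
      (exp ((z - 1) * ln u) / (sqrt PI * exp (m * ln 2) * Gamma z)) =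
      A * exp (- z * ln 2 + (z + k) * ln (4 / E) + (z - 1) * ln u - m * ln 2)).
  { unfold A. replace (- z * ln 2 + (z + k) * ln (4 / E) + (z - 1) * ln u - m * ln 2) with (- z * ln 2 + (z + k) * ln (4 / E) + (z - 1) * ln u + - (m * ln 2)) by ring.
    rewrite !exp_plus, exp_Ropp.
    assert (0 < exp (m * ln 2)) by apply exp_pos.
    set (q := sqrt PI) in *. rewrite <- Hspp. field. repeat split; lra. }
  assert (R : Kfin k * exp (k * ln z) * exp ((z - 1) * ln (4 / (x + y) ^ 2)) *
      exp (- (1 + k) * ln E - z * th x y s) =
      A * exp ((2 * k + 1/2) * ln 2 + 1 + (z - 1) * ln (4 / (x + y)^2) + (- (1 + k) * ln E - z * th x y s))).
  { unfold A, Kfin. fold M. rewrite !exp_plus. field. lra. }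
  rewrite L, R. apply Rmult_le_compat_l. left; unfold A; apply Rmult_lt_0_compat; [apply Rdiv_lt_0_compat; lra | apply exp_pos].
  apply exp_mono.
  rewrite (exp_Rln_eq 4 E) by lra. rewrite (exp_Rln_eq 4 ((x+y)^2)) by lra.
  assert (Hl4 : ln 4 = 2 * ln 2) by (replace 4 with (2 * 2) by ring; rewrite ln_mult by lra; ring).
  assert (Hzm : m = z - 1/2) by (unfold z; field).
  rewrite Hzm, Hl4. rewrite Hl4 in Hlth.
  assert (Hthle : th x y s <= 1) by lra.
  assert (Hq : (z - 1) * ln (1 - th x y s) <= (z - 1) * (- th x y s)) by (apply Rmult_le_compat_l; lra).
  rewrite Hlth in Hq.
  set (a := ln 2) in *. set (b := ln E) in *. set (c := ln u) in *. set (d := ln ((x+y)^2)) in *. set (t := th x y s) in *.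
  nra.
Qed.

Theorem mainTheorem7 :
  forall (alpha k : R), alpha >= - (1 / 2) -> k > 0 ->
  exists C : R,
    forall (a : R) (j : nat) (x y : R),
      a >= 1 -> (1 <= j)%nat -> x > 0 -> y > 0 -> x <> y ->
      I_k k (alpha + a * INR j) x y
      <= C / (Rpower (x + y) (2 * alpha + 1) * Rpower (x * y) (a * INR j)
              * Rpower (Rabs (x - y)) (2 * k)).
Proof.
  intros alpha k Hal Hk.
  exists (Kfin k * K3 k / 4 * exp ((alpha + 1/2) * ln 4)).
  intros a j x y Ha Hj Hx Hy Hxy.
  assert (HjR : 1 <= INR j) by (replace 1 with (INR 1) by reflexivity; apply le_INR; auto).
  set (n := a * INR j).
  assert (Hn : 1 <= n) by (unfold n; nra).
  set (m := alpha + n).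
  assert (Hm : 1/2 <= m) by (unfold m; lra).
  set (z := m + 1/2).
  assert (Hz : 1 <= z) by (unfold z; lra).
  assert (HG := gamma_pos z Hz).
  assert (Hpi : 0 < PI) by apply PI_RGT_0.
  assert (Hsp : 0 < sqrt PI) by (apply sqrt_lt_R0; lra).
  assert (HS : 0 < (x + y)^2) by nra.
  assert (HD := D2_pos x y Hxy).
  set (Kz := Kfin k * exp (k * ln z) * exp ((z - 1) * ln (4 / (x + y)^2))).
  assert (HKfin : 0 < Kfin k).
  { unfold Kfin. assert (0 < exp (k * ln (Mk k))) by apply exp_pos.
    repeat apply Rmult_lt_0_compat; try apply exp_pos; try lra; apply Rinv_0_lt_compat; lra. }
  assert (HKz : 0 < Kz) by (unfold Kz; apply Rmult_lt_0_compat; [apply Rmult_lt_0_compat; [lra | apply exp_pos] | apply exp_pos]).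
  destruct (s_int_bound k z x y Hk Hz Hx Hy Hxy) as [HexP HP].
  assert (Hpt : forall s, -1 < s < 1 ->
     Rint (fun xi => Rpower xi (- k) * beta m xi * exp (- ((x ^ 2 + y ^ 2 + 2 * x * y * s) / (4 * xi)))) 0 1
       * Pi_density m s <= Kz * Psi0 k z x y s).
  { intros s Hs.
    assert (HE := Ef_pos x y s Hx Hy Hxy ltac:(lra)).
    set (c := / sqrt PI * exp (- (m + 1/2) * ln 2)).
    assert (Hc : 0 <= c) by (left; unfold c; apply Rmult_lt_0_compat; [apply Rinv_0_lt_compat; lra | apply exp_pos]).
    assert (Hin := inner_bound (fun xi => Rpower xi (- k) * beta m xi * exp (- ((x ^ 2 + y ^ 2 + 2 * x * y * s) / (4 * xi))))
                   z k (Ef x y s) c Hz Hk HE Hc).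
    assert (Hdens : 0 <= Pi_density m s).
    { unfold Pi_density. left. apply Rdiv_lt_0_compat. apply exp_pos.
      apply Rmult_lt_0_compat; [apply Rmult_lt_0_compat; [lra | apply exp_pos] |]. fold z. lra. }
    apply Rle_trans with ((c * (1 + exp (k * ln (Mk k))) * exp (k * ln z) * Gamma z * exp ((z + k) * ln (4 / Ef x y s))) * Pi_density m s).
    { apply Rmult_le_compat_r; auto. apply Hin. intros xi Hxi.
      assert (H1 := inner_pt m k (Ef x y s) xi Hm Hk Hxi).
      unfold Ef in H1 at 1. unfold c.
      replace (- (z + 1 + k) * ln xi - Ef x y s / (4 * xi)) with (- (m + 3 / 2 + k) * ln xi - Ef x y s / (4 * xi)) by (unfold z; field; lra).
      exact H1. }
    unfold c, Kz, z. apply bd_dens; auto. }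
  unfold I_k. fold n m.
  set (F := fun s => Rint (fun xi => Rpower xi (- k) * beta m xi * exp (- ((x ^ 2 + y ^ 2 + 2 * x * y * s) / (4 * xi)))) 0 1 * Pi_density m s).
  assert (HexK : ex_RInt (fun s => Kz * Psi0 k z x y s) (-1) 1).
  { apply ex_RInt_der. lra. intros t Ht. apply ex_derive_mult. apply ex_derive_const. apply Psi0_der; auto; lra. }
  assert (Hstep : Rint F (-1) 1 <= Kz * RInt (Psi0 k z x y) (-1) 1).
  { rewrite <- (RInt_scal_R (Psi0 k z x y) (-1) 1 Kz HexP).
    destruct (classic (ex_RInt F (-1) 1)) as [HF|HF].
    - rewrite Rint_RInt by auto. apply RInt_le'; [lra | exact HF | exact HexK | ]. intros t Ht. apply Hpt; auto.
    - rewrite Rint_not by auto. apply RInt_ge0; [lra | exact HexK | ]. intros t Ht.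
      left; apply Rmult_lt_0_compat; auto; apply exp_pos. }
  apply Rle_trans with (1 := Hstep).
  apply Rle_trans with (Kz * (K3 k * exp (- k * ln z) * exp (- k * ln ((x - y)^2)) / (x + y)^2)).
  { apply Rmult_le_compat_l; lra. }
  assert (Hxy0 : 0 < Rabs (x - y)) by (apply Rabs_pos_lt; lra).
  assert (HK3 : 0 < K3 k).
  { unfold K3. assert (0 < Ka k) by apply exp_pos. assert (0 < Kd k) by apply exp_pos.
    assert (0 < exp (k * ln 4)) by apply exp_pos.
    assert (0 < Ka k / k) by (apply Rdiv_lt_0_compat; lra).
    assert (0 < 8 * exp (k * ln 4) * Kd k / k) by (apply Rdiv_lt_0_compat; [repeat apply Rmult_lt_0_compat|]; lra).
    lra. }
  unfold Rpower.
  set (L := ln (x + y)). set (P := ln (x * y)). set (Dl := ln (Rabs (x - y))).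
  assert (HL2 : ln ((x + y)^2) = 2 * L).
  { replace ((x + y)^2) with ((x + y) * (x + y)) by ring. rewrite ln_mult by lra. unfold L; ring. }
  assert (HD2 : ln ((x - y)^2) = 2 * Dl).
  { replace ((x - y)^2) with (Rabs (x - y) * Rabs (x - y)).
    rewrite ln_mult by lra. unfold Dl; ring.
    rewrite <- Rabs_mult. rewrite Rabs_right. ring. nra. }
  assert (H4S : ln (4 / (x + y)^2) = ln 4 - 2 * L) by (rewrite exp_Rln_eq by lra; rewrite HL2; ring).
  assert (HSexp : (x + y)^2 = exp (2 * L)) by (rewrite <- HL2, exp_ln; lra).
  apply Rle_trans with (Kfin k * K3 k * exp ((z - 1) * (ln 4 - 2 * L) - 2 * k * Dl - 2 * L)).
  { right. unfold Kz. rewrite H4S, HD2. rewrite HSexp.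
    replace ((z - 1) * (ln 4 - 2 * L) - 2 * k * Dl - 2 * L) with ((z - 1) * (ln 4 - 2 * L) + (- k * (2 * Dl)) + - (2 * L)) by ring.
    rewrite !exp_plus, exp_Ropp.
    assert (Hzz : exp (k * ln z) * exp (- k * ln z) = 1).
    { rewrite <- exp_plus. replace (k * ln z + - k * ln z) with 0 by ring. apply exp_0. }
    assert (0 < exp (2 * L)) by apply exp_pos.
    set (e1 := exp (k * ln z)) in *. set (e2 := exp (- k * ln z)) in *.
    set (e3 := exp ((z - 1) * (ln 4 - 2 * L))). set (e4 := exp (- k * (2 * Dl))). set (e5 := exp (2 * L)) in *.
    replace (Kfin k * e1 * e3 * (K3 k * e2 * e4 / e5)) with (Kfin k * K3 k * e3 * e4 / e5 * (e1 * e2)) by (field; lra).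
    rewrite Hzz. field. lra. }
  assert (Hden : exp ((2 * alpha + 1) * L) * exp (n * P) * exp (2 * k * Dl) = exp ((2 * alpha + 1) * L + n * P + 2 * k * Dl)) by (rewrite !exp_plus; ring).
  rewrite Hden.
  assert (H4 : / 4 = exp (- ln 4)) by (rewrite exp_Ropp, exp_ln; lra).
  replace (Kfin k * K3 k / 4 * exp ((alpha + 1 / 2) * ln 4) / exp ((2 * alpha + 1) * L + n * P + 2 * k * Dl))
    with (Kfin k * K3 k * (/ 4 * exp ((alpha + 1 / 2) * ln 4) * / exp ((2 * alpha + 1) * L + n * P + 2 * k * Dl))) by (field; apply Rgt_not_eq, exp_pos).
  rewrite H4, <- exp_Ropp, <- !exp_plus.
  apply Rmult_le_compat_l. left; apply Rmult_lt_0_compat; lra.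
  apply exp_mono.
  assert (HPL : ln 4 + P <= 2 * L).
  { rewrite <- HL2. unfold P. rewrite <- ln_mult by nra. apply ln_mono. nra. nra. }
  assert (Hineq : n * (ln 4 - 2 * L) <= - (n * P)).
  { assert (n * (ln 4 + P - 2 * L) <= 0) by (apply Rmult_le_0_l; lra).
    replace (n * (ln 4 - 2 * L)) with (n * (ln 4 + P - 2 * L) - n * P) by ring. lra. }
  replace ((z - 1) * (ln 4 - 2 * L) - 2 * k * Dl - 2 * L) with
    ((alpha - 1/2) * ln 4 + n * (ln 4 - 2 * L) - (2 * alpha + 1) * L - 2 * k * Dl) by (unfold z, m; field).
  replace (- ln 4 + (alpha + 1 / 2) * ln 4 + - ((2 * alpha + 1) * L + n * P + 2 * k * Dl)) with
    ((alpha - 1/2) * ln 4 - (2 * alpha + 1) * L - n * P - 2 * k * Dl) by field.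
  lra.
Qed.
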